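(* Assume $\beta S\le Z$ almost surely (in particular under $(\beta,\alpha)$-bounded estimates). Then for every $z>0$, $$u_{\mathrm{SRPT\text{-}B}}(z)-u_{\mathrm{SRPT\text{-}SE}}(z)\le 3z\max\{1-\beta,0\}\,\mathbb{E}[S\mathbf 1(Z>z)].$$
   Context: $(S,Z)$ is a random pair of positive reals (true size and estimated size of a random job), and $0<\beta\le\alpha$ are constants. Rank functions on job states $(s,z,a)$ with age $a\in[0,s)$: SRPT-B: $r(s,z,a)=\min\{|z-a|,z\}$; SRPT-SE: $r(s,z,a)=\frac{z}{s}(s-a)$. For a policy $\pi$ with rank function $r_\pi$, $u_\pi(x)=\mathbb{E}\big[\,\big|\{a\in[0,S): r_\pi(S,Z,a)\le x\}\big|^2\big]$, where $|\cdot|$ is Lebesgue measure. *)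

(* Defs.v *)
From HB Require Import structures.
From mathcomp Require Import all_boot all_order all_algebra.
From mathcomp Require Import all_classical all_reals all_analysis.
Set Implicit Arguments. Unset Strict Implicit. Unset Printing Implicit Defensive.
Import Order.TTheory GRing.Theory Num.Theory.
Local Open Scope classical_set_scope.
Local Open Scope ring_scope.

(* Rank functions on job states (s, z, a): true size s, estimated size z, age a. *)
Definition rank_SRPT_B {R : realType} (s z a : R) : R :=
  Num.min `|z - a| z.
Definition rank_SRPT_SE {R : realType} (s z a : R) : R :=
  z / s * (s - a).

Definition low_rank_ages {R : realType} (r : R -> R -> R -> R) (s z x : R) : set R :=
  [set a | 0 <= a /\ a < s /\ r s z a <= x].

Definition u_policy {d : measure_display} {T : measurableType d} {R : realType}
  (P : probability T R) (S Z : T -> R) (r : R -> R -> R -> R) (x : R) : \bar R :=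
  (\int[P]_w ((@lebesgue_measure R) (low_rank_ages r (S w) (Z w) x) ^+ 2))%E.

(* Main.v *)
Require Import Defs.
From HB Require Import structures.
From mathcomp Require Import all_boot all_order all_algebra.
From mathcomp Require Import all_classical all_reals all_analysis.
From mathcomp Require Import ring lra measurable_realfun.
Import Order.TTheory GRing.Theory Num.Theory.
Local Open Scope classical_set_scope.
Local Open Scope ring_scope.


Definition gB {R : realType} (x s e : R) : R :=
  if e <= x then s else Num.max 0 (Num.min s (e + x) - (e - x)).
Definition gSE {R : realType} (x s e : R) : R := Num.min s (x * s / e).

Lemma key {R : realType} (x s e b : R) : 0 < s -> 0 < e -> 0 < x -> 0 < b ->
  b * s <= e ->
  gB x s e ^+ 2 <= gSE x s e ^+ 2 + 3 * x * Num.max (1 - b) 0 * (s * (x < e)%R%:R).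
Proof.
move=> s0 e0 x0 b0 bse; rewrite /gB /gSE.
set q := x * s / e.
have hq : q * e = x * s by rewrite /q mulfVK ?gt_eqF.
have q0 : 0 < q by rewrite /q divr_gt0 ?mulr_gt0.
have m0 : 0 <= Num.max (1 - b) 0 by rewrite le_max lexx orbT.
case: leP => ex.
  have -> : Num.min s q = s.
    apply/min_idPl; rewrite -(ler_pM2r e0) hq; nra.
  by rewrite mulr0n !mulr0 addr0.
rewrite mulr1n mulr1.
have -> : Num.min s q = q.
  apply/min_idPr; rewrite -(ler_pM2r e0) hq; nra.
have Mle : forall M, 0 <= M -> M <= q -> M ^+ 2 <= q ^+ 2 + 3 * x * Num.max (1 - b) 0 * s.
  move=> M M0 Mq; have : M ^+ 2 <= q ^+ 2 by rewrite ler_sqr// ?nnegrE ltW.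
  have : 0 <= 3 * x * Num.max (1 - b) 0 * s by rewrite !mulr_ge0 // ltW.
  lra.
case: (leP s e) => se.
  apply: Mle; first by rewrite le_max lexx.
  rewrite ge_max ltW //=.
  have : Num.min s (e + x) <= s by rewrite ge_min lexx.
  have : (s - e + x) * e <= q * e by rewrite hq; nra.
  rewrite ler_pM2r //; lra.
have -> : Num.max (1 - b) 0 = 1 - b.
  apply/max_idPl; have : b * s < s by apply: le_lt_trans bse se.
  nra.
have hxq : x * e <= q * e by rewrite hq; nra.
rewrite ler_pM2r // in hxq.
have ds : s - e <= (1 - b) * s by lra.
have : 3 * x * (s - e) <= 3 * x * (1 - b) * s by nra.
case: (leP s (e + x)) => sx.
  rewrite (max_idPr _); last lra.
  nra.
rewrite (max_idPr _); last lra.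
nra.
Qed.


Lemma leb_SE {R : realType} (x s e : R) : 0 < s -> 0 < e -> 0 < x ->
  (@lebesgue_measure R) (low_rank_ages rank_SRPT_SE s e x) = (gSE x s e)%:E.
Proof.
move=> s0 e0 x0; rewrite /gSE.
set q := x * s / e.
have hq : q * e = x * s by rewrite /q mulfVK ?gt_eqF.
have q0 : 0 < q by rewrite /q divr_gt0 ?mulr_gt0.
have -> : low_rank_ages rank_SRPT_SE s e x = [set` `[s - Num.min s q, s[].
  apply/seteqP; split => a /=; rewrite /rank_SRPT_SE in_itv /=.
  - move=> [a0 [als ra]].
    have E : e * (s - a) = s * (e / s * (s - a)) by field; rewrite gt_eqF.
    have h1 : e * (s - a) <= e * q.
      by rewrite E [e * q]mulrC hq [x * s]mulrC ler_pM2l.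
    rewrite ler_pM2l // in h1.
    rewrite als andbT minEle; case: (leP s q) => ?; lra.
  - move=> /andP[h1 h2].
    have h3 : s - q <= a by move: h1; rewrite minEle; case: (leP s q) => ?; lra.
    have h4 : 0 <= a by move: h1; rewrite minEle; case: (leP s q) => ?; lra.
    split => //; split => //.
    rewrite -(ler_pM2l s0).
    have -> : s * (e / s * (s - a)) = e * (s - a) by field; rewrite gt_eqF.
    rewrite [s * x]mulrC -hq [q * e]mulrC ler_pM2l //; lra.
rewrite lebesgue_measure_itv /= lte_fin.
have -> : s - Num.min s q < s.
  by rewrite ltrBlDr ltrDl lt_min s0 q0.
by rewrite -EFinD opprB addrC subrK.
Qed.

Lemma rankB_le {R : realType} (x s e a : R) : x < e ->
  (rank_SRPT_B s e a <= x) = (e - x <= a) && (a <= e + x).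
Proof.
move=> xe; rewrite /rank_SRPT_B ge_min (leNgt e) xe orbF ler_norml.
apply/idP/idP => /andP[h1 h2]; apply/andP; split; lra.
Qed.

Lemma leb_B {R : realType} (x s e : R) : 0 < s -> 0 < e -> 0 < x ->
  (@lebesgue_measure R) (low_rank_ages rank_SRPT_B s e x) = (gB x s e)%:E.
Proof.
move=> s0 e0 x0; rewrite /gB; case: (leP e x) => ex.
  have -> : low_rank_ages rank_SRPT_B s e x = [set` `[0, s[].
    apply/seteqP; split => a /=; rewrite in_itv /=.
    - by move=> [-> [-> _]].
    - move=> /andP[h1 h2]; split => //; split => //.
      by rewrite /rank_SRPT_B ge_min ex orbT.
  by rewrite lebesgue_measure_itv /= lte_fin s0 -EFinD subr0.
case: (leP s (e + x)) => sx.
  idtac.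
  have -> : low_rank_ages rank_SRPT_B s e x = [set` `[e - x, s[].
    apply/seteqP; split => a /=; rewrite in_itv /=.
    - move=> [a0 [als]]; rewrite rankB_le // => /andP[h1 h2].
      by rewrite h1 als.
    - move=> /andP[h1 h2]; split; first lra.
      by split => //; rewrite rankB_le // h1 /=; lra.
  rewrite lebesgue_measure_itv /= lte_fin.
  case: ltP => h.
    by rewrite -EFinD (max_idPr _) //; lra.
  by rewrite (max_idPl _) //; lra.
idtac.
have -> : low_rank_ages rank_SRPT_B s e x = [set` `[e - x, e + x]].
  apply/seteqP; split => a /=; rewrite in_itv /=.
  - by move=> [a0 [als]]; rewrite rankB_le.
  - move=> /andP[h1 h2]; split; first lra.
    by split; [lra | rewrite rankB_le // h1 h2].
rewrite lebesgue_measure_itv /= lte_fin.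
have -> : e - x < e + x by lra.
by rewrite -EFinD (max_idPr _) //; lra.
Qed.


Lemma measurable_inv_pos {R : realType} :
  measurable_fun (`]0, +oo[%classic : set R) (@GRing.inv R).
Proof.
apply: open_continuous_measurable_fun; first exact: interval_open.
move=> x; rewrite inE /= in_itv /= andbT => x0.
by apply: inv_continuous; rewrite gt_eqF.
Qed.

Lemma measurable_invZ d (T : measurableType d) (R : realType) (Z : T -> R) :
  measurable_fun setT Z -> (forall w, 0 < Z w) ->
  measurable_fun setT (fun w => (Z w)^-1).
Proof.
move=> mZ Zpos.
apply: (@measurable_comp _ _ _ _ _ _ (`]0, +oo[%classic : set R) (@GRing.inv R) _ Z).
- exact: measurable_itv.
- by move=> _ [w _ <-] /=; rewrite in_itv /= andbT.
- exact: measurable_inv_pos.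
- exact: mZ.
Qed.

Theorem mainTheorem9 (d : measure_display) (T : measurableType d) (R : realType)
  (P : probability T R) (S Z : T -> R) (alpha beta : R)
  (mS : measurable_fun setT S) (mZ : measurable_fun setT Z)
  (Spos : forall w, 0 < S w) (Zpos : forall w, 0 < Z w)
  (hbeta : 0 < beta) (hba : beta <= alpha)
  (hlow : {ae P, forall w, beta * S w <= Z w})
  (z : R) (hz : 0 < z) :
  (u_policy P S Z rank_SRPT_B z
   <= u_policy P S Z rank_SRPT_SE z
      + (3 * z * Num.max (1 - beta) 0)%:E
        * \int[P]_w (S w * (z < Z w)%R%:R)%:E)%E.
Proof.
have cst_m (c : R) : measurable_fun setT (fun _ : T => c) by exact: measurable_cst.
have mB : measurable_fun setT (fun w => gB z (S w) (Z w)).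
  rewrite /gB; apply: measurable_fun_ifT.
  - exact: measurable_fun_ler.
  - exact: mS.
  apply: measurable_maxr => //.
  apply: measurable_funB.
    by apply: measurable_minr => //; apply: measurable_funD.
  exact: measurable_funB.
have mSE : measurable_fun setT (fun w => gSE z (S w) (Z w)).
  rewrite /gSE; apply: measurable_minr => //.
  apply: measurable_funM; first exact: measurable_funM.
  exact: measurable_invZ.
have mI : measurable_fun setT (fun w => S w * (z < Z w)%R%:R).
  have -> : (fun w => S w * (z < Z w)%R%:R) = (fun w => if z < Z w then S w else 0).
    by apply/funext => w; case: ltP => _; rewrite ?mulr1n ?mulr0n ?mulr1 ?mulr0.
  apply: measurable_fun_ifT => //; exact: measurable_fun_ltr.
have c0 : 0 <= 3 * z * Num.max (1 - beta) 0.
  by rewrite mulr_ge0 ?mulr_ge0 ?le_max ?lexx ?orbT // ltW.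
rewrite /u_policy.
have -> : (fun w => (@lebesgue_measure R) (low_rank_ages rank_SRPT_B (S w) (Z w) z) ^+ 2)%E
    = (fun w => ((gB z (S w) (Z w)) ^+ 2)%:E).
  by apply/funext => w; rewrite leb_B // EFin_expe.
have -> : (fun w => (@lebesgue_measure R) (low_rank_ages rank_SRPT_SE (S w) (Z w) z) ^+ 2)%E
    = (fun w => ((gSE z (S w) (Z w)) ^+ 2)%:E).
  by apply/funext => w; rewrite leb_SE // EFin_expe.
have fB0 : forall w, [set: T] w -> (0 <= ((gB z (S w) (Z w)) ^+ 2)%:E)%E.
  by move=> w _; rewrite lee_fin sqr_ge0.
have fSE0 : forall w, [set: T] w -> (0 <= ((gSE z (S w) (Z w)) ^+ 2)%:E)%E.
  by move=> w _; rewrite lee_fin sqr_ge0.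
have fI0 : forall w, [set: T] w -> (0 <= (S w * (z < Z w)%R%:R)%:E)%E.
  by move=> w _; rewrite lee_fin mulr_ge0 // ltW.
have fcI0 : forall w, [set: T] w ->
   (0 <= (3 * z * Num.max (1 - beta) 0)%:E * (S w * (z < Z w)%R%:R)%:E)%E.
  by move=> w _; rewrite -EFinM lee_fin mulr_ge0 // mulr_ge0 // ltW.
have mfB : measurable_fun setT (fun w => ((gB z (S w) (Z w)) ^+ 2)%:E).
  by apply/measurable_EFinP; exact: measurable_funX.
have mfSE : measurable_fun setT (fun w => ((gSE z (S w) (Z w)) ^+ 2)%:E).
  by apply/measurable_EFinP; exact: measurable_funX.
have mfI : measurable_fun setT (fun w => (S w * (z < Z w)%R%:R)%:E).
  exact/measurable_EFinP.
have mfcI : measurable_fun setT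
   (fun w => ((3 * z * Num.max (1 - beta) 0)%:E * (S w * (z < Z w)%R%:R)%:E)%E).
  under eq_fun do rewrite -EFinM.
  by apply/measurable_EFinP; apply: measurable_funM => //.
rewrite -(ge0_integralZl_EFin _ _ fI0 mfI c0) //.
rewrite -(ge0_integralD _ _ fSE0 mfSE fcI0 mfcI) //.
apply: (ae_ge0_le_integral _ fB0 mfB) => //.
- by move=> w _; apply: adde_ge0; [exact: fSE0 | exact: fcI0].
- by apply: emeasurable_funD.
apply: filterS hlow => w hw _.
rewrite -EFinM -EFinD lee_fin.
exact: key.
Qed.
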